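(* Let $G$ be an amenable (discrete) group, let $(X,u)$ and $(Y,v)$ be $G$-spaces, and assume $X$ is $G$-complemented in its bidual. Then every $G$-centralizer $\Omega:Y\curvearrowright X$ is at bounded distance from a $G$-equivariant quasi-linear map $\omega:Y_{00}\to X_\infty$ (defined on the same $Y_{00}$, with values in the same $X_\infty$). If moreover $\Omega$ is linear, then $\omega$ can be chosen linear.
   Context: Let $G$ be a semigroup. A $G$-space is a Banach space $X$ with a bounded action $g\mapsto u(g)\in\mathcal L(X)$ ($u(gh)=u(g)u(h)$, $\sup_g\|u(g)\|<\infty$). A linear map $T$ between $G$-spaces $(X,u)$, $(Y,v)$ is $G$-equivariant if $Tu(g)=v(g)T$ for all $g$. A quasi-linear map $\Omega:Y\curvearrowright X$ between $G$-spaces $(Y,v)$ and $(X,u)$ is a homogeneous map $\Omega:Y_{00}\to X_\infty$, where $Y_{00}\subseteq Y$ is a dense linear subspace with $v(g)Y_{00}\subseteq Y_{00}$ for all $g$, and $X_\infty\supseteq X$ is a vector space to which the action $u$ extends as an action by linear maps (still written $u(g)$), such that for some $C$ and all $y,y'\in Y_{00}$: $\Omega(y+y')-\Omega y-\Omega y'\in X$ and $\|\Omega(y+y')-\Omega y-\Omega y'\|_X\le C(\|y\|_Y+\|y'\|_Y)$. $\Omega$ is a $G$-centralizer if there is $C$ with $u(g)\Omega y-\Omega v(g)y\in X$ and $\|u(g)\Omega y-\Omega v(g)y\|_X\le C\|y\|_Y$ for all $g\in G$, $y\in Y_{00}$; it is $G$-equivariant if $u(g)\Omega y=\Omega v(g)y$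 for all $g\in G$, $y\in Y_{00}$. Two maps $\Omega_1,\Omega_2:Y_{00}\to X_\infty$ are at bounded distance (boundedly equivalent) if $\Omega_1y-\Omega_2y\in X$ and $\|\Omega_1y-\Omega_2y\|_X\le C\|y\|_Y$ for all $y\in Y_{00}$. A $G$-space $(X,u)$ is $G$-complemented in its bidual if there is a bounded linear projection $P$ of $X^{**}$ onto (the canonical copy of) $X$ with $Pu(g)^{**}=u(g)P$ for all $g\in G$. *)

(* Defs.v *)
From Stdlib Require Import Reals.
Open Scope R_scope.
Set Implicit Arguments.
Unset Strict Implicit.

Record VSpace := {
  vcar :> Type;
  vzero : vcar;
  vadd : vcar -> vcar -> vcar;
  vopp : vcar -> vcar;
  vscal : R -> vcar -> vcar;
  vadd_assoc : forall x y z, vadd x (vadd y z) = vadd (vadd x y) z;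
  vadd_comm : forall x y, vadd x y = vadd y x;
  vadd_0 : forall x, vadd x vzero = x;
  vadd_opp : forall x, vadd x (vopp x) = vzero;
  vscal_1 : forall x, vscal 1 x = x;
  vscal_assoc : forall a b x, vscal a (vscal b x) = vscal (a * b) x;
  vscal_distr_v : forall a x y, vscal a (vadd x y) = vadd (vscal a x) (vscal a y);
  vscal_distr_s : forall a b x, vscal (a + b) x = vadd (vscal a x) (vscal b x)
}.

Definition vsub (V : VSpace) (x y : V) : V := vadd x (vopp y).

Definition is_linear (V W : VSpace) (T : V -> W) : Prop :=
  (forall x y, T (vadd x y) = vadd (T x) (T y)) /\
  (forall a x, T (vscal a x) = vscal a (T x)).

Record Banach := {
  bvs :> VSpace;
  bnorm : bvs -> R;
  bnorm_nonneg : forall x, 0 <= bnorm x;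
  bnorm_sep : forall x, bnorm x = 0 -> x = vzero bvs;
  bnorm_triangle : forall x y, bnorm (vadd x y) <= bnorm x + bnorm y;
  bnorm_hom : forall a x, bnorm (vscal a x) = Rabs a * bnorm x;
  bcomplete : forall s : nat -> bvs,
    (forall eps, eps > 0 -> exists N, forall n m, (n >= N)%nat -> (m >= N)%nat ->
        bnorm (vsub (s n) (s m)) < eps) ->
    exists l, forall eps, eps > 0 -> exists N, forall n, (n >= N)%nat ->
        bnorm (vsub (s n) l) < eps
}.

Record Group := {
  gcar :> Type;
  gmul : gcar -> gcar -> gcar;
  gone : gcar;
  ginv : gcar -> gcar;
  gmul_assoc : forall a b c, gmul a (gmul b c) = gmul (gmul a b) c;
  gmul_1l : forall a, gmul gone a = a;
  gmul_1r : forall a, gmul a gone = a;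
  gmul_Vl : forall a, gmul (ginv a) a = gone;
  gmul_Vr : forall a, gmul a (ginv a) = gone
}.

Definition bounded_fun (G : Group) (f : G -> R) : Prop :=
  exists M, forall g, Rabs (f g) <= M.
Arguments bounded_fun {G} f.

Definition invariant_mean (G : Group) (m : (G -> R) -> R) : Prop :=
  (forall f h : G -> R, bounded_fun f -> bounded_fun h ->
     m (fun x => f x + h x) = m f + m h) /\
  (forall a (f : G -> R), bounded_fun f -> m (fun x => a * f x) = a * m f) /\
  (forall f : G -> R, bounded_fun f -> (forall x, 0 <= f x) -> 0 <= m f) /\
  m (fun _ => 1) = 1 /\
  (forall (g : G) (f : G -> R), bounded_fun f -> m (fun x => f (gmul g x)) = m f).

Definition amenable (G : Group) : Prop := exists m : (G -> R) -> R, invariant_mean m.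

Record GSpace (G : Group) := {
  gsp :> Banach;
  act : G -> gsp -> gsp;
  act_lin : forall g, is_linear (act g);
  act_mul : forall g h x, act (gmul g h) x = act g (act h x);
  act_bnd : exists M, forall g x, bnorm (act g x) <= M * bnorm x
}.

Definition op_bound (X : Banach) (f : X -> R) (K : R) : Prop :=
  forall x, Rabs (f x) <= K * bnorm x.

Record dual_el (X : Banach) := {
  dfun :> X -> R;
  dfun_lin : (forall x y, dfun (vadd x y) = dfun x + dfun y) /\
             (forall a x, dfun (vscal a x) = a * dfun x);
  dfun_bnd : exists K, op_bound dfun K
}.

(** Elements of X**: bounded linear functionals on X*.  Linearity is phrased
    pointwise; boundedness: |phi f| <= K * ||f||, where ||f|| is the inf of the
    bounds of f. *)
Record bidual_el (X : Banach) := {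
  bfun :> dual_el X -> R;
  bfun_add : forall f h k : dual_el X, (forall x, k x = f x + h x) ->
      bfun k = bfun f + bfun h;
  bfun_scal : forall a (f k : dual_el X), (forall x, k x = a * f x) ->
      bfun k = a * bfun f;
  bfun_bnd : exists K, 0 <= K /\
      forall (f : dual_el X) L, 0 <= L -> op_bound f L -> Rabs (bfun f) <= K * L
}.

Definition G_complemented_in_bidual (G : Group) (X : GSpace G) : Prop :=
  exists P : bidual_el X -> X,
    (forall phi psi chi : bidual_el X, (forall f, chi f = phi f + psi f) ->
        P chi = vadd (P phi) (P psi)) /\
    (forall a (phi chi : bidual_el X), (forall f, chi f = a * phi f) ->
        P chi = vscal a (P phi)) /\
    (exists C, 0 <= C /\ forall (phi : bidual_el X) K, 0 <= K ->
        (forall (f : dual_el X) L, 0 <= L -> op_bound f L -> Rabs (phi f) <= K * L) ->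
        bnorm (P phi) <= C * K) /\
    (forall x (phi : bidual_el X), (forall f, phi f = f x) -> P phi = x) /\
    (* equivariance: P (u(g)** phi) = u(g) (P phi), with
       (u(g)** phi)(f) = phi (f o u(g)) *)
    (forall g (phi psi : bidual_el X),
        (forall f f' : dual_el X, (forall x, f' x = f (act g x)) -> psi f = phi f') ->
        P psi = act g (P phi)).

(** X_oo: a vector space containing X (via an injective linear map j) to
    which the action u extends as an action U by linear maps. *)
Definition action_extension (G : Group) (X : GSpace G) (Xinf : VSpace)
    (j : X -> Xinf) (U : G -> Xinf -> Xinf) : Prop :=
  is_linear j /\ (forall x y, j x = j y -> x = y) /\
  (forall g, is_linear (U g)) /\
  (forall g h z, U (gmul g h) z = U g (U h z)) /\
  (forall g x, U g (j x) = j (act g x)).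

Definition dense_inv_subspace (G : Group) (Y : GSpace G) (Y00 : Y -> Prop) : Prop :=
  Y00 (vzero Y) /\
  (forall y y', Y00 y -> Y00 y' -> Y00 (vadd y y')) /\
  (forall a y, Y00 y -> Y00 (vscal a y)) /\
  (forall y eps, eps > 0 -> exists y', Y00 y' /\ bnorm (vsub y y') < eps) /\
  (forall g y, Y00 y -> Y00 (act g y)).

Definition in_X_le (X : Banach) (Xinf : VSpace) (j : X -> Xinf) (z : Xinf) (c : R)
  : Prop := exists x, j x = z /\ bnorm x <= c.

Definition homogeneous_on (Y : Banach) (Xinf : VSpace) (Y00 : Y -> Prop)
    (O : Y -> Xinf) : Prop :=
  forall a y, Y00 y -> O (vscal a y) = vscal a (O y).

Definition quasi_linear (Y X : Banach) (Xinf : VSpace) (j : X -> Xinf)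
    (Y00 : Y -> Prop) (O : Y -> Xinf) : Prop :=
  homogeneous_on Y00 O /\
  exists C, forall y y', Y00 y -> Y00 y' ->
    in_X_le j (vsub (vsub (O (vadd y y')) (O y)) (O y'))
              (C * (bnorm y + bnorm y')).

Definition linear_on (Y : Banach) (Xinf : VSpace) (Y00 : Y -> Prop)
    (O : Y -> Xinf) : Prop :=
  homogeneous_on Y00 O /\
  forall y y', Y00 y -> Y00 y' -> O (vadd y y') = vadd (O y) (O y').

Definition G_centralizer (G : Group) (Y X : GSpace G) (Xinf : VSpace)
    (j : X -> Xinf) (U : G -> Xinf -> Xinf) (Y00 : Y -> Prop) (O : Y -> Xinf)
  : Prop :=
  exists C, forall g y, Y00 y ->
    in_X_le j (vsub (U g (O y)) (O (act g y))) (C * bnorm y).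

Definition G_equivariant_map (G : Group) (Y : GSpace G) (Xinf : VSpace)
    (U : G -> Xinf -> Xinf) (Y00 : Y -> Prop) (O : Y -> Xinf) : Prop :=
  forall g y, Y00 y -> U g (O y) = O (act g y).

Definition bounded_distance (Y X : Banach) (Xinf : VSpace) (j : X -> Xinf)
    (Y00 : Y -> Prop) (O1 O2 : Y -> Xinf) : Prop :=
  exists C, forall y, Y00 y -> in_X_le j (vsub (O1 y) (O2 y)) (C * bnorm y).

(* Main.v *)
Require Import Defs.
From Stdlib Require Import Reals Lra ClassicalEpsilon FunctionalExtensionality.
Open Scope R_scope.
Set Implicit Arguments.

Section VS.
Context {V : VSpace}.
Implicit Types x y z a b c d p q : V.

Lemma vadd_0l x : vadd (vzero V) x = x.
Proof. rewrite vadd_comm; apply vadd_0. Qed.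

Lemma vadd_cancel x y z : vadd x z = vadd y z -> x = y.
Proof.
  intro H. rewrite <- (vadd_0 x), <- (vadd_0 y), <- (vadd_opp z), !vadd_assoc, H. reflexivity.
Qed.

Lemma vscal0 x : vscal 0 x = vzero V.
Proof.
  apply (vadd_cancel _ _ (vscal 0 x)). rewrite vadd_0l, <- vscal_distr_s.
  f_equal; ring.
Qed.

Lemma opp_unique x a b : vadd x a = vzero V -> vadd x b = vzero V -> a = b.
Proof.
  intros Ha Hb. rewrite <- (vadd_0 a), <- Hb, vadd_assoc, (vadd_comm a x), Ha, vadd_0l.
  reflexivity.
Qed.

Lemma vopp_scal x : vopp x = vscal (-1) x.
Proof.
  apply (opp_unique x). apply vadd_opp.
  rewrite <- (vscal_1 x) at 1. rewrite <- vscal_distr_s.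
  replace (1 + -1) with 0 by ring. apply vscal0.
Qed.

Lemma vopp_add x y : vopp (vadd x y) = vadd (vopp x) (vopp y).
Proof. rewrite !vopp_scal. apply vscal_distr_v. Qed.

Lemma vopp_opp x : vopp (vopp x) = x.
Proof. rewrite !vopp_scal, vscal_assoc. replace (-1 * -1) with 1 by ring. apply vscal_1. Qed.

Lemma vopp0 : vopp (vzero V) = vzero V.
Proof. rewrite <- (vadd_0l (vopp (vzero V))). apply vadd_opp. Qed.

Lemma add4 a b c d : vadd (vadd a b) (vadd c d) = vadd (vadd a c) (vadd b d).
Proof.
  rewrite <- !vadd_assoc. f_equal. rewrite !vadd_assoc. f_equal. apply vadd_comm.
Qed.

Lemma vsub_self a : vsub a a = vzero V.
Proof. apply vadd_opp. Qed.

Lemma sub_add_sub a b c : vadd (vsub a b) (vsub b c) = vsub a c.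
Proof.
  unfold vsub. rewrite <- vadd_assoc. f_equal. rewrite vadd_assoc, (vadd_comm (vopp b) b), vadd_opp, vadd_0l.
  reflexivity.
Qed.

Lemma vsub_add a a' b b' : vsub (vadd a a') (vadd b b') = vadd (vsub a b) (vsub a' b').
Proof. unfold vsub. rewrite vopp_add. apply add4. Qed.

Lemma vscal_sub r a b : vscal r (vsub a b) = vsub (vscal r a) (vscal r b).
Proof.
  unfold vsub. rewrite vscal_distr_v. f_equal. rewrite !vopp_scal, !vscal_assoc. f_equal; ring.
Qed.

Lemma add_sub_cancel a p q : vadd a (vadd p (vsub q a)) = vadd q p.
Proof.
  unfold vsub. rewrite (vadd_comm q (vopp a)), vadd_assoc, (vadd_comm a p), <- vadd_assoc,
    (vadd_assoc a), vadd_opp, vadd_0l. apply vadd_comm.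
Qed.

Lemma sub_add_r a p : vsub a (vadd a p) = vopp p.
Proof.
  unfold vsub. rewrite vopp_add, vadd_assoc, vadd_opp, vadd_0l. reflexivity.
Qed.

Lemma vsub_opp a b : vopp (vsub a b) = vsub b a.
Proof. unfold vsub. rewrite vopp_add, vopp_opp. apply vadd_comm. Qed.

Lemma sub0 a : vsub a (vzero V) = a.
Proof. unfold vsub. rewrite vopp0. apply vadd_0. Qed.
End VS.

Section Lin.
Context {V W : VSpace}.
Variable T : V -> W.
Hypothesis HT : is_linear T.

Lemma lin0 : T (vzero V) = vzero W.
Proof. rewrite <- (vscal0 (vzero V)), (proj2 HT). apply vscal0. Qed.
Lemma linN x : T (vopp x) = vopp (T x).
Proof. rewrite !vopp_scal. apply (proj2 HT). Qed.
Lemma linB x y : T (vsub x y) = vsub (T x) (T y).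
Proof. unfold vsub. rewrite (proj1 HT), linN. reflexivity. Qed.
Lemma linD x y : T (vadd x y) = vadd (T x) (T y).
Proof. apply (proj1 HT). Qed.
Lemma linZ a x : T (vscal a x) = vscal a (T x).
Proof. apply (proj2 HT). Qed.
End Lin.

Lemma bnorm0 (X : Banach) : bnorm (vzero X) = 0.
Proof. rewrite <- (vscal0 (vzero X)), bnorm_hom, Rabs_R0. ring. Qed.
Lemma bnormN (X : Banach) (x : X) : bnorm (vopp x) = bnorm x.
Proof. rewrite vopp_scal, bnorm_hom. replace (Rabs (-1)) with 1 by (rewrite Rabs_left; lra). ring. Qed.

Lemma ginv_mul (G : Group) (h k : G) : gmul (ginv (gmul h k)) h = ginv k.
Proof.
  assert (E : gmul (gmul (ginv (gmul h k)) h) k = gone G).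
  { rewrite <- gmul_assoc. apply gmul_Vl. }
  rewrite <- (gmul_1r (gmul (ginv (gmul h k)) h)), <- (gmul_Vr k), gmul_assoc, E.
  apply gmul_1l.
Qed.
Unset Implicit Arguments.
Section Main.
Context {G : Group} {X Y : GSpace G} {Xinf : VSpace}.
Variable j : X -> Xinf.
Variable U : G -> Xinf -> Xinf.
Variable Y00 : Y -> Prop.
Variable Omega : Y -> Xinf.
Variable m : (G -> R) -> R.
Hypothesis Hm : invariant_mean m.
Variable P : bidual_el X -> X.
Hypothesis Padd : forall phi psi chi : bidual_el X, (forall f, chi f = phi f + psi f) ->
        P chi = vadd (P phi) (P psi).
Hypothesis Pscal : forall a (phi chi : bidual_el X), (forall f, chi f = a * phi f) ->
        P chi = vscal a (P phi).
Variable Cp : R.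
Hypothesis HCp : 0 <= Cp.
Hypothesis Pbnd : forall (phi : bidual_el X) K, 0 <= K ->
        (forall (f : dual_el X) L, 0 <= L -> op_bound f L -> Rabs (phi f) <= K * L) ->
        bnorm (P phi) <= Cp * K.
Hypothesis Pproj : forall x (phi : bidual_el X), (forall f, phi f = f x) -> P phi = x.
Hypothesis Pequiv : forall g (phi psi : bidual_el X),
        (forall f f' : dual_el X, (forall x, f' x = f (act g x)) -> psi f = phi f') ->
        P psi = act g (P phi).
Hypothesis jlin : is_linear j.
Hypothesis jinj : forall x y, j x = j y -> x = y.
Hypothesis Ulin : forall g, is_linear (U g).
Hypothesis Umul : forall g h z, U (gmul g h) z = U g (U h z).
Hypothesis Uj : forall g x, U g (j x) = j (act g x).
Hypothesis Yadd : forall y y', Y00 y -> Y00 y' -> Y00 (vadd y y').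
Hypothesis Yscal : forall a y, Y00 y -> Y00 (vscal a y).
Hypothesis Yact : forall g y, Y00 y -> Y00 (act g y).
Hypothesis Ohom : homogeneous_on Y00 Omega.
Variable Cq : R.
Hypothesis Hq : forall y y', Y00 y -> Y00 y' ->
    in_X_le j (vsub (vsub (Omega (vadd y y')) (Omega y)) (Omega y'))
              (Cq * (bnorm y + bnorm y')).
Variable C : R.
Hypothesis Hc : forall g y, Y00 y ->
    in_X_le j (vsub (U g (Omega y)) (Omega (act g y))) (C * bnorm y).
Variable MX : R.
Hypothesis HMX : forall g (x : X), bnorm (act g x) <= MX * bnorm x.
Variable MY : R.
Hypothesis HMY : forall g (y : Y), bnorm (act g y) <= MY * bnorm y.

Lemma m_ext (f h : G -> R) : (forall x, f x = h x) -> m f = m h.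
Proof. intro H. f_equal. apply functional_extensionality. exact H. Qed.

Lemma m_add (f h : G -> R) : bounded_fun f -> bounded_fun h -> m (fun x => f x + h x) = m f + m h.
Proof. apply (proj1 Hm). Qed.
Lemma m_scal a (f : G -> R) : bounded_fun f -> m (fun x => a * f x) = a * m f.
Proof. apply (proj1 (proj2 Hm)). Qed.
Lemma m_pos (f : G -> R) : bounded_fun f -> (forall x, 0 <= f x) -> 0 <= m f.
Proof. apply (proj1 (proj2 (proj2 Hm))). Qed.
Lemma m_one : m (fun _ => 1) = 1.
Proof. apply (proj1 (proj2 (proj2 (proj2 Hm)))). Qed.
Lemma m_inv g (f : G -> R) : bounded_fun f -> m (fun x => f (gmul g x)) = m f.
Proof. intro H. exact (proj2 (proj2 (proj2 (proj2 Hm))) g f H). Qed.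

Lemma bnd_const c : bounded_fun (fun _ : G => c).
Proof. exists (Rabs c). intro; lra. Qed.

Lemma m_const c : m (fun _ => c) = c.
Proof.
  rewrite (m_ext (fun _ => c) (fun x => c * (fun _ => 1) x)) by (intro; simpl; ring).
  rewrite m_scal, m_one by apply bnd_const. ring.
Qed.

Lemma bnd_opp (f : G -> R) : bounded_fun f -> bounded_fun (fun x => -1 * f x).
Proof. intros [M HM]. exists M. intro g. rewrite Rabs_mult.
  replace (Rabs (-1)) with 1 by (rewrite Rabs_left; lra). specialize (HM g). lra. Qed.

Lemma Rabs_le_inv x b : Rabs x <= b -> -b <= x <= b.
Proof. intro H. assert (H1 := Rle_abs x). assert (H2 := Rle_abs (-x)). rewrite Rabs_Ropp in H2. lra. Qed.

Lemma bnd_add (f h : G -> R) : bounded_fun f -> bounded_fun h -> bounded_fun (fun x => f x + h x).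
Proof. intros [M HM] [N HN]. exists (M + N). intro g. eapply Rle_trans. apply Rabs_triang.
  specialize (HM g). specialize (HN g). lra. Qed.

Lemma m_le (f : G -> R) B : bounded_fun f -> (forall g, Rabs (f g) <= B) -> Rabs (m f) <= B.
Proof.
  intros Hf HB. apply Rabs_le.
  assert (E1 : m (fun x => (fun _ => B) x + f x) = B + m f).
  { rewrite m_add. rewrite m_const. reflexivity. apply bnd_const. exact Hf. }
  assert (E2 : m (fun x => (fun _ => B) x + (fun x => -1 * f x) x) = B + -1 * m f).
  { rewrite m_add. rewrite m_const, m_scal. reflexivity. exact Hf. apply bnd_const. apply bnd_opp, Hf. }
  assert (H1 : 0 <= m (fun x => (fun _ => B) x + f x)).
  { apply m_pos. apply bnd_add. apply bnd_const. exact Hf.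
    intro g. specialize (HB g). apply Rabs_le_inv in HB. lra. }
  assert (H2 : 0 <= m (fun x => (fun _ => B) x + (fun x => -1 * f x) x)).
  { apply m_pos. apply bnd_add. apply bnd_const. apply bnd_opp, Hf.
    intro g. specialize (HB g). apply Rabs_le_inv in HB. lra. }
  lra.
Qed.

Section MB.
Variable c : G -> X.
Variable B : R.
Hypothesis Hc0 : forall g, bnorm (c g) <= B.

Lemma bounded_comp (f : dual_el X) : bounded_fun (fun g => f (c g)).
Proof.
  destruct (dfun_bnd f) as [L HL]. exists (Rabs L * B). intro g.
  eapply Rle_trans. apply HL.
  apply Rle_trans with (Rabs L * bnorm (c g)).
  - apply Rmult_le_compat_r. apply bnorm_nonneg. apply Rle_abs.
  - apply Rmult_le_compat_l. apply Rabs_pos. apply Hc0.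
Qed.

Lemma mb_add (f h k : dual_el X) : (forall x, k x = f x + h x) ->
  m (fun g => k (c g)) = m (fun g => f (c g)) + m (fun g => h (c g)).
Proof.
  intro H. rewrite (m_ext _ (fun g => (fun g => f (c g)) g + (fun g => h (c g)) g)) by (intro; apply H).
  apply m_add; apply bounded_comp.
Qed.

Lemma mb_scal a (f k : dual_el X) : (forall x, k x = a * f x) ->
  m (fun g => k (c g)) = a * m (fun g => f (c g)).
Proof.
  intro H. rewrite (m_ext _ (fun g => a * (fun g => f (c g)) g)) by (intro; apply H).
  apply m_scal; apply bounded_comp.
Qed.

Lemma B_nonneg : 0 <= B.
Proof. eapply Rle_trans. apply bnorm_nonneg. apply (Hc0 (gone G)). Qed.

Lemma mb_bound (f : dual_el X) L : 0 <= L -> op_bound f L -> Rabs (m (fun g => f (c g))) <= B * L.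
Proof.
  intros HL Hf. apply m_le. apply bounded_comp. intro g.
  eapply Rle_trans. apply Hf. rewrite Rmult_comm. apply Rmult_le_compat_r; auto.
Qed.

Lemma mb_bnd : exists K, 0 <= K /\
      forall (f : dual_el X) L, 0 <= L -> op_bound f L -> Rabs (m (fun g => f (c g))) <= K * L.
Proof. exists B. split. apply B_nonneg. apply mb_bound. Qed.

Definition mb : bidual_el X :=
  {| bfun := fun f => m (fun g => f (c g)); bfun_add := mb_add; bfun_scal := mb_scal;
     bfun_bnd := mb_bnd |}.
End MB.

Lemma P_ext (chi phi : bidual_el X) : (forall f, chi f = phi f) -> P chi = P phi.
Proof. intro H. rewrite (Pscal 1 phi chi). apply vscal_1. intro f. rewrite H. ring. Qed.

Definition T (g : G) (y : Y) : Xinf :=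
  vadd (vsub (U g (Omega (act (ginv g) y))) (U (gone G) (Omega y)))
       (vsub (U (gone G) (Omega (act (gone G) y))) (Omega (act (gone G) y))).
Definition K0 := Rabs MX * Rabs C + Rabs C * Rabs MY.

Lemma K0_nonneg : 0 <= K0.
Proof. unfold K0. assert (H1 := Rabs_pos MX). assert (H2 := Rabs_pos C). assert (H3 := Rabs_pos MY). nra. Qed.

Lemma act_comp {Z : GSpace G} (a b : G) (z : Z) : act a (act b z) = act (gmul a b) z.
Proof. symmetry. apply act_mul. Qed.

Lemma U_inv g z : U g (U (ginv g) z) = U (gone G) z.
Proof. rewrite <- Umul, gmul_Vr. reflexivity. Qed.
Lemma U_e_r h z : U h (U (gone G) z) = U h z.
Proof. rewrite <- Umul, gmul_1r. reflexivity. Qed.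

Lemma T_inX g y : Y00 y -> exists x, j x = T g y /\ bnorm x <= K0 * bnorm y.
Proof.
  intro Hy.
  destruct (Hc (ginv g) y Hy) as [x1 [Hx1 Nx1]].
  destruct (Hc (gone G) (act (gone G) y) (Yact _ _ Hy)) as [x2 [Hx2 Nx2]].
  rewrite act_comp, gmul_1l in Hx2.
  exists (vadd (vopp (act g x1)) x2). split.
  - unfold T. rewrite (linD jlin), (linN jlin), <- Uj, Hx1, (linB (Ulin g)), U_inv, vsub_opp, Hx2.
    reflexivity.
  - eapply Rle_trans. apply bnorm_triangle. rewrite bnormN.
    assert (A1 := HMX g x1). assert (A2 := HMY (gone G) y).
    assert (n1 := bnorm_nonneg x1). assert (n2 := bnorm_nonneg (act (gone G) y)).
    assert (n0 := bnorm_nonneg y).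
    assert (R1 := Rle_abs MX). assert (R2 := Rle_abs C). assert (R3 := Rle_abs MY).
    assert (P1 := Rabs_pos MX). assert (P2 := Rabs_pos C). assert (P3 := Rabs_pos MY).
    unfold K0.
    assert (S1 : bnorm (act g x1) <= Rabs MX * Rabs C * bnorm y).
    { eapply Rle_trans. apply A1. apply Rle_trans with (Rabs MX * bnorm x1). nra.
      rewrite Rmult_assoc. apply Rmult_le_compat_l. auto. nra. }
    assert (S2 : bnorm x2 <= Rabs C * Rabs MY * bnorm y).
    { eapply Rle_trans. apply Nx2. apply Rle_trans with (Rabs C * bnorm (act (gone G) y)). nra.
      rewrite Rmult_assoc. apply Rmult_le_compat_l. auto. nra. }
    nra.
Qed.

Definition cx (y : Y) (g : G) : X :=
  match excluded_middle_informative (exists x, j x = T g y /\ bnorm x <= K0 * bnorm y) with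
  | left H => proj1_sig (constructive_indefinite_description _ H)
  | right _ => vzero X
  end.

Lemma cx_bound y g : bnorm (cx y g) <= K0 * bnorm y.
Proof.
  unfold cx. destruct excluded_middle_informative as [H|H].
  - exact (proj2 (proj2_sig (constructive_indefinite_description _ H))).
  - rewrite bnorm0. assert (H1 := K0_nonneg). assert (H2 := bnorm_nonneg y). nra.
Qed.

Lemma cx_spec y g : Y00 y -> j (cx y g) = T g y.
Proof.
  intro Hy. unfold cx. destruct excluded_middle_informative as [H|H].
  - exact (proj1 (proj2_sig (constructive_indefinite_description _ H))).
  - exfalso. apply H. apply T_inX. exact Hy.
Qed.

Lemma cx_unique y g x : Y00 y -> j x = T g y -> cx y g = x.
Proof. intros Hy Hx. apply jinj. rewrite cx_spec; auto. Qed.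

Definition Phi (y : Y) : bidual_el X := mb (cx y) _ (cx_bound y).
Definition D (y : Y) : X := P (Phi y).
Definition omega (y : Y) : Xinf := vadd (Omega y) (j (D y)).

Lemma D_bound y : bnorm (D y) <= Cp * K0 * bnorm y.
Proof.
  unfold D. rewrite Rmult_assoc. apply Pbnd.
  - assert (H1 := K0_nonneg). assert (H2 := bnorm_nonneg y). nra.
  - intros f L HL Hf. apply (mb_bound (cx y) _ (cx_bound y)); auto.
Qed.

Lemma Ohom' a y : Y00 y -> Omega (vscal a y) = vscal a (Omega y).
Proof. intro H. apply Ohom. exact H. Qed.

Lemma T_hom g a y : Y00 y -> T g (vscal a y) = vscal a (T g y).
Proof.
  intro Hy. unfold T.
  rewrite !(linZ (act_lin _ _)).
  rewrite (Ohom' a _ (Yact _ _ Hy)), (Ohom' a _ Hy), (Ohom' a _ (Yact _ _ Hy)).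
  rewrite !(linZ (Ulin _)), vscal_distr_v, !vscal_sub. reflexivity.
Qed.

Lemma dual_add (f : dual_el X) x y : f (vadd x y) = f x + f y.
Proof. apply (proj1 (dfun_lin f)). Qed.
Lemma dual_scal (f : dual_el X) a x : f (vscal a x) = a * f x.
Proof. apply (proj2 (dfun_lin f)). Qed.

Lemma cx_hom a y g : Y00 y -> cx (vscal a y) g = vscal a (cx y g).
Proof.
  intro Hy. apply cx_unique. apply Yscal, Hy.
  rewrite (linZ jlin), cx_spec, T_hom; auto.
Qed.

Lemma D_hom a y : Y00 y -> D (vscal a y) = vscal a (D y).
Proof.
  intro Hy. unfold D. apply Pscal. intro f. simpl.
  rewrite (m_ext _ (fun g => a * (fun g => f (cx y g)) g)).
  apply m_scal. apply (bounded_comp _ _ (cx_bound y)).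
  intro g. simpl. rewrite cx_hom, dual_scal; auto.
Qed.

Section LinCase.
Hypothesis Olin : forall y y', Y00 y -> Y00 y' -> Omega (vadd y y') = vadd (Omega y) (Omega y').

Lemma T_add g y y' : Y00 y -> Y00 y' -> T g (vadd y y') = vadd (T g y) (T g y').
Proof.
  intros Hy Hy'. unfold T.
  rewrite !(linD (act_lin _ _)).
  rewrite (Olin _ _ (Yact _ _ Hy) (Yact _ _ Hy')), (Olin _ _ Hy Hy'),
    (Olin _ _ (Yact _ _ Hy) (Yact _ _ Hy')).
  rewrite !(linD (Ulin _)), !vsub_add. apply add4.
Qed.

Lemma cx_add y y' g : Y00 y -> Y00 y' -> cx (vadd y y') g = vadd (cx y g) (cx y' g).
Proof.
  intros Hy Hy'. apply cx_unique. apply Yadd; auto.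
  rewrite (linD jlin), !cx_spec, T_add; auto.
Qed.

Lemma D_add y y' : Y00 y -> Y00 y' -> D (vadd y y') = vadd (D y) (D y').
Proof.
  intros Hy Hy'. unfold D. apply Padd. intro f. simpl.
  rewrite (m_ext _ (fun g => (fun g => f (cx y g)) g + (fun g => f (cx y' g)) g)).
  apply m_add. apply (bounded_comp _ _ (cx_bound y)). apply (bounded_comp _ _ (cx_bound y')).
  intro g. simpl. rewrite cx_add, dual_add; auto.
Qed.
End LinCase.

Lemma T_equiv h k y : Y00 y ->
  T (gmul h k) (act h y) = vadd (U h (T k y)) (vsub (U h (Omega y)) (Omega (act h y))).
Proof.
  intro Hy. unfold T.
  rewrite !act_comp, ginv_mul, gmul_1l, Umul, sub_add_sub.
  rewrite (linD (Ulin h)), !(linB (Ulin h)), !U_e_r, vsub_self, vadd_0, sub_add_sub.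
  reflexivity.
Qed.

Lemma cx_equiv h k y b : Y00 y -> j b = vsub (U h (Omega y)) (Omega (act h y)) ->
  cx (act h y) (gmul h k) = vadd (act h (cx y k)) b.
Proof.
  intros Hy Hb. apply cx_unique. apply Yact, Hy.
  rewrite (linD jlin), <- Uj, cx_spec, Hb, T_equiv; auto.
Qed.

Lemma act_cx_bound h y k : bnorm (act h (cx y k)) <= Rabs MX * (K0 * bnorm y).
Proof.
  eapply Rle_trans. apply HMX. apply Rle_trans with (Rabs MX * bnorm (cx y k)).
  apply Rmult_le_compat_r. apply bnorm_nonneg. apply Rle_abs.
  apply Rmult_le_compat_l. apply Rabs_pos. apply cx_bound.
Qed.

Lemma D_equiv h y b : Y00 y -> j b = vsub (U h (Omega y)) (Omega (act h y)) ->
  D (act h y) = vadd (act h (D y)) b.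
Proof.
  intros Hy Hb.
  set (Psi := mb (fun k => act h (cx y k)) _ (act_cx_bound h y)).
  set (Iota := mb (fun _ : G => b) (bnorm b) (fun _ => Rle_refl _)).
  unfold D. transitivity (vadd (P Psi) (P Iota)).
  - apply Padd. intro f. simpl.
    rewrite <- (m_inv h (fun g => f (cx (act h y) g))) by apply (bounded_comp _ _ (cx_bound _)).
    rewrite (m_ext _ (fun k => (fun k => f (act h (cx y k))) k + (fun _ => f b) k)).
    apply m_add. apply (bounded_comp _ _ (act_cx_bound h y)). apply bnd_const.
    intro k. simpl. rewrite (cx_equiv h k y b Hy Hb), dual_add. reflexivity.
  - f_equal.
    + apply Pequiv. intros f f' Hf. simpl. apply m_ext. intro k. rewrite Hf. reflexivity.
    + apply Pproj. intro f. simpl. apply m_const.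
Qed.

Lemma bnorm_sub (Z : Banach) (a b : Z) : bnorm (vsub a b) <= bnorm a + bnorm b.
Proof. unfold vsub. eapply Rle_trans. apply bnorm_triangle. rewrite bnormN. lra. Qed.

Lemma main_sec :
  (quasi_linear j Y00 omega /\ G_equivariant_map U Y00 omega /\
   bounded_distance j Y00 Omega omega) /\
  (linear_on Y00 Omega -> linear_on Y00 omega).
Proof.
  assert (Hhom : homogeneous_on Y00 omega).
  { intros a y Hy. unfold omega. rewrite (Ohom' a y Hy), D_hom, (linZ jlin), vscal_distr_v; auto. }
  split; [split; [|split]|].
  - split. exact Hhom.
    exists (Cq + 2 * (Cp * K0)). intros y y' Hy Hy'.
    destruct (Hq y y' Hy Hy') as [x0 [Hx0 Nx0]].
    exists (vadd x0 (vsub (vsub (D (vadd y y')) (D y)) (D y'))). split.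
    + unfold omega. rewrite !vsub_add, (linD jlin), !(linB jlin), Hx0. reflexivity.
    + eapply Rle_trans. apply bnorm_triangle.
      eapply Rle_trans. apply Rplus_le_compat_l. eapply Rle_trans. apply bnorm_sub.
      apply Rplus_le_compat_r. apply bnorm_sub.
      assert (A1 := D_bound (vadd y y')). assert (A2 := D_bound y). assert (A3 := D_bound y').
      assert (T1 := bnorm_triangle y y').
      assert (Q0 : 0 <= Cp * K0) by (apply Rmult_le_pos; [exact HCp | apply K0_nonneg]).
      assert (n1 := bnorm_nonneg y). assert (n2 := bnorm_nonneg y').
      nra.
  - intros h y Hy. destruct (Hc h y Hy) as [b [Hb _]].
    unfold omega. rewrite (D_equiv h y b Hy Hb), (linD (Ulin h)), Uj, !(linD jlin), Hb.
    symmetry. apply add_sub_cancel.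
  - exists (Cp * K0). intros y Hy. exists (vopp (D y)). split.
    + unfold omega. rewrite sub_add_r, (linN jlin). reflexivity.
    + rewrite bnormN. apply D_bound.
  - intros [_ Olin]. split. exact Hhom.
    intros y y' Hy Hy'. unfold omega. rewrite Olin, D_add, (linD jlin); auto. apply add4.
Qed.
End Main.

Theorem mainTheorem2 (G : Group) (X Y : GSpace G) (Xinf : VSpace)
  (j : X -> Xinf) (U : G -> Xinf -> Xinf) (Y00 : Y -> Prop) (Omega : Y -> Xinf) :
  amenable G ->
  G_complemented_in_bidual X ->
  action_extension j U ->
  dense_inv_subspace Y00 ->
  quasi_linear j Y00 Omega ->
  G_centralizer j U Y00 Omega ->
  (exists omega : Y -> Xinf,
     quasi_linear j Y00 omega /\ G_equivariant_map U Y00 omega /\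
     bounded_distance j Y00 Omega omega) /\
  (linear_on Y00 Omega ->
   exists omega : Y -> Xinf,
     linear_on Y00 omega /\ quasi_linear j Y00 omega /\
     G_equivariant_map U Y00 omega /\ bounded_distance j Y00 Omega omega).
Proof.
  intros [m Hm] [P [Padd [Pscal [[Cp [HCp Pbnd]] [Pproj Pequiv]]]]]
    [jlin [jinj [Ulin [Umul Uj]]]] [_ [Yadd [Yscal [_ Yact]]]] [Ohom [Cq Hq]] [C Hc].
  destruct (act_bnd X) as [MX HMX]. destruct (act_bnd Y) as [MY HMY].
  destruct (main_sec j U Y00 Omega m Hm P Padd Pscal Cp HCp Pbnd Pproj Pequiv jlin
    jinj Ulin Umul Uj Yadd Yscal Yact Ohom Cq Hq C Hc MX HMX MY HMY) as [[Q1 [Q2 Q3]] Q4].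
  split.
  - eexists. split; [exact Q1 | split; [exact Q2 | exact Q3]].
  - intro HL. eexists. split; [exact (Q4 HL) | split; [exact Q1 | split; [exact Q2 | exact Q3]]].
Qed.
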